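(* Let $G$ and $H$ be co-$H$ spaces and $X$ a pointed space. Then composition of maps induces a well-defined homomorphism $e[G,H]\otimes e[H,X]\to e[G,X]$ (i.e. composition of congruence classes is bilinear).
   Context: Two pointed maps $f,g\colon A\to B$ are congruent if $\Sigma f\simeq\Sigma g$; $e[A,B]$ is the set of congruence classes of pointed maps $A\to B$. For a co-$H$ space $G$, $e[G,B]$ is an Abelian group with operation induced by the co-$H$ structure of $G$. *)

(* Defs.v *)
From HB Require Import structures.
From mathcomp Require Import all_boot all_order all_algebra.
From mathcomp Require Import generic_quotient.
From mathcomp Require Import all_classical all_reals topology wedge_sigT.
From mathcomp Require Import Rstruct Rstruct_topology.

Set Implicit Arguments.
Unset Strict Implicit.
Unset Printing Implicit Defensive.

Import Order.TTheory GRing.Theory Num.Theory.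
Local Open Scope classical_set_scope.
Local Open Scope ring_scope.
Local Open Scope quotient_scope.

Definition unit_interval : Type := set_type (`[0, 1]%classic : set Rdefinitions.R).
HB.instance Definition _ := Topological.on unit_interval.

Lemma zero_in_unit_interval : (0 : Rdefinitions.R) \in (`[0, 1]%classic : set _).
Proof. by rewrite inE /= in_itv /= lexx ler01. Qed.

Definition ui0 : unit_interval := exist _ 0 zero_in_unit_interval.
HB.instance Definition _ := isPointed.Build unit_interval ui0.

Definition pointed_map (A B : ptopologicalType) (f : A -> B) : Prop :=
  continuous f /\ f point = point.

Definition phomotopic (A B : ptopologicalType) (f g : A -> B) : Prop :=
  exists Hm : unit_interval * A -> B,
    [/\ continuous Hm,
        (forall t : unit_interval, val t = 0 -> forall a, Hm (t, a) = f a),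
        (forall t : unit_interval, val t = 1 -> forall a, Hm (t, a) = g a) &
        (forall t : unit_interval, Hm (t, point) = point)].

(* Reduced suspension  Sigma A = ([0,1] x A) / ([0,1] x {*} u {0,1} x A). *)
Section Suspension.
Variable A : ptopologicalType.

Definition susp_collapsed (x : unit_interval * A) : bool :=
  [|| val x.1 == 0, val x.1 == 1 | x.2 == point].

Definition susp_r (x y : unit_interval * A) : bool :=
  (x == y) || (susp_collapsed x && susp_collapsed y).

Lemma susp_r_refl : reflexive susp_r.
Proof. by move=> x; rewrite /susp_r eqxx. Qed.

Lemma susp_r_sym : symmetric susp_r.
Proof. by move=> x y; rewrite /susp_r eq_sym andbC. Qed.

Lemma susp_r_trans : transitive susp_r.
Proof.
move=> y x z /orP[/eqP -> //|/andP[cx cy]] /orP[/eqP <-|/andP[_ cz]].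
  by rewrite /susp_r cx cy orbT.
by rewrite /susp_r cx cz orbT.
Qed.

Definition susp_rel := EquivRel susp_r susp_r_refl susp_r_sym susp_r_trans.

Definition susp_quot := {eq_quot susp_rel}.
Definition Susp : Type := quotient_topology susp_quot.
HB.instance Definition _ := Topological.on Susp.
HB.instance Definition _ := Quotient.on Susp.

Definition susp_point : Susp := \pi_Susp (ui0, point).
HB.instance Definition _ := isPointed.Build Susp susp_point.

End Suspension.

(* Suspension of a (pointed) map f : A -> B:  Sigma f [t, a] = [t, f a]
   (well defined on classes when f is pointed). *)
Definition susp_map (A B : ptopologicalType) (f : A -> B) : Susp A -> Susp B :=
  fun q => \pi_(Susp B) ((repr q).1, f (repr q).2).

Definition congruent (A B : ptopologicalType) (f g : A -> B) : Prop :=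
  phomotopic (susp_map f) (susp_map g).

Definition wedge2 (G : ptopologicalType) : ptopologicalType :=
  pwedge (fun _ : bool => G).

Definition wedge_proj (G : ptopologicalType) (b : bool) : wedge2 G -> G :=
  wedge_fun (fun (i : bool) (x : G) => if i == b then x else point).

Definition coH_structure (G : ptopologicalType) (mu : G -> wedge2 G) : Prop :=
  [/\ pointed_map mu,
      phomotopic (wedge_proj true \o mu) idfun &
      phomotopic (wedge_proj false \o mu) idfun].

Definition coH_sum (G B : ptopologicalType) (mu : G -> wedge2 G) (f g : G -> B) : G -> B :=
  wedge_fun (fun (i : bool) (x : G) => if i then f x else g x) \o mu.

(* Main.v *)
Require Import Defs.
From HB Require Import structures.
From mathcomp Require Import all_boot all_order all_algebra generic_quotient.
From mathcomp Require Import all_classical all_reals topology wedge_sigT.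
From mathcomp Require Import Rstruct Rstruct_topology normedtype.
From mathcomp Require Import lra.
Import Order.TTheory GRing.Theory Num.Theory.
Local Open Scope classical_set_scope.
Local Open Scope ring_scope.
Local Open Scope quotient_scope.
Set Implicit Arguments.
Unset Strict Implicit.
Unset Printing Implicit Defensive.
Local Notation RR := Rdefinitions.R.
Definition clampR (x : RR) : RR := Num.min (Num.max x 0) 1.

Lemma clampR_in x : clampR x \in (`[0, 1]%classic : set RR).
Proof.
rewrite inE /= in_itv /= /clampR; apply/andP; split.
  by rewrite le_min ler01 le_max lexx orbT.
by rewrite ge_min lexx orbT.
Qed.

Definition clamp (x : RR) : unit_interval := exist _ (clampR x) (clampR_in x).

Lemma clampR_continuous : continuous clampR.
Proof.
move=> x; apply: (@continuous_min RR RR (fun x => Num.max x 0) (fun _ => 1) x);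
  last exact: cst_continuous.
apply: (@continuous_max RR RR id (fun _ => 0) x);
  [by move=> ?; exact: cvg_id | exact: cst_continuous].
Qed.

Lemma val_continuous : continuous (val : unit_interval -> RR).
Proof. exact: initial_continuous. Qed.

Lemma clamp_continuous : continuous clamp.
Proof.
apply: (@continuous_comp_initial _ _ _ (@set_val _ _)).
exact: clampR_continuous.
Qed.

Lemma ui_ge0 (t : unit_interval) : 0 <= val t.
Proof. by case: t => x /= /set_mem; rewrite /= in_itv /= => /andP[]. Qed.
Lemma ui_le1 (t : unit_interval) : val t <= 1.
Proof. by case: t => x /= /set_mem; rewrite /= in_itv /= => /andP[]. Qed.

Lemma clampK (t : unit_interval) : clamp (val t) = t.
Proof.
apply: val_inj => /=; rewrite /clampR.
by rewrite (max_l (ui_ge0 t)) (min_l (ui_le1 t)).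
Qed.

Lemma ui_compact : compact [set: unit_interval].
Proof.
have -> : [set: unit_interval] = clamp @` `[0, 1]%classic.
  apply/seteqP; split => t // _; exists (val t) => //; last exact: clampK.
  by rewrite /= in_itv /= ui_ge0 ui_le1.
apply: continuous_compact; last exact: segment_compact.
by apply: continuous_subspaceT => x; exact: clamp_continuous.
Qed.

Lemma compact_locally_compact (T : topologicalType) :
  compact [set: T] -> locally_compact [set: T].
Proof.
move=> cT x _; rewrite withinET; exists setT; first exact: filterT.
by split => //; exact: closedT.
Qed.

Lemma ui_hausdorff : hausdorff_space unit_interval.
Proof.
rewrite open_hausdorff => x y xy.
have : val x != val y by apply: contra_neq xy => /val_inj.
move: (@Rhausdorff RR); rewrite open_hausdorff => /[apply] -[[A B]] /=.
move=> [Ax By] [oA oB /eqP AB0].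
exists (val @^-1` A, val @^-1` B) => /=.
  by split; rewrite inE /=; apply/set_mem.
split; [by exists A| by exists B|].
apply/eqP; rewrite -subset0 => z [/= za zb].
by have : (A `&` B) (val z) by []; rewrite AB0.
Qed.
Section QL.
Import ArrowAsCompactOpen.
Lemma quot_prod_continuous (T : topologicalType) (Q0 : quotType T)
  (L W : topologicalType) (F : L * T -> W) :
  locally_compact [set: L] -> hausdorff_space L -> continuous F ->
  (forall l a b, \pi_(quotient_topology Q0) a = \pi_(quotient_topology Q0) b -> F (l, a) = F (l, b)) ->
  continuous (fun z : L * quotient_topology Q0 => F (z.1, repr z.2)).
Proof.
move=> lcL hL cF resp.
pose h : quotient_topology Q0 -> {compact-open, L -> W} := fun q l => F (l, repr q).
have ch : continuous h.
  apply/quotient_continuous.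
  have -> : h \o \pi_(quotient_topology Q0) = curry (F \o unstable.swap).
    apply/funext => a; apply/funext => l; rewrite /h /= /curry /=.
    by apply: resp; rewrite reprK.
  apply: continuous_curry_fun => x.
  by apply: continuous_comp; [exact: swap_continuous | exact: cF].
have chq : forall q, continuous (h q).
  move=> q l; rewrite /h; apply: (@continuous_comp _ _ _ (fun l => (l, repr q)) F).
    by apply: cvg_pair => /=; [exact: cvg_id | exact: cvg_cst].
  exact: cF.
have := continuous_uncurry lcL hL ch chq.
move=> cu z; have -> : (fun z : L * quotient_topology Q0 => F (z.1, repr z.2))
   = uncurry h \o unstable.swap by apply/funext => -[].
by apply: continuous_comp; [exact: swap_continuous | exact: cu].
Qed.
End QL.

Lemma within_agree (T S : topologicalType) (A : set T) (f g : T -> S) :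
  (forall x, A x -> g x = f x) -> continuous g -> {within A, continuous f}.
Proof.
move=> gf cg; apply: (@subspace_eq_continuous _ _ _ g).
  by move=> x /set_mem Ax; exact: gf.
exact: continuous_subspaceT.
Qed.

Lemma paste2 (T S : topologicalType) (A B : set T) (f : T -> S) :
  closed A -> closed B -> (forall x, A x \/ B x) ->
  {within A, continuous f} -> {within B, continuous f} -> continuous f.
Proof.
move=> cA cB AB fA fB; apply/continuous_subspace_setT.
have -> : [set: T] = A `|` B by apply/seteqP; split => x // _; exact: AB.
exact: withinU_continuous.
Qed.

Lemma closed_preim (T U : topologicalType) (f : T -> U) (D : set U) :
  continuous f -> closed D -> closed (f @^-1` D).
Proof. by move=> cf; apply: preimage_closed => x _; exact: cf. Qed.

Lemma ui_val1 (t : unit_interval) : val (clamp (val t)) = val t.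
Proof. by rewrite clampK. Qed.

Lemma clamp_val x : 0 <= x -> x <= 1 -> val (clamp x) = x.
Proof. by move=> x0 x1; rewrite /= /clampR (max_l x0) (min_l x1). Qed.

Lemma fst_val_continuous (A : topologicalType) :
  continuous (fun z : unit_interval * A => val z.1).
Proof.
move=> z; apply: (@continuous_comp _ _ _ fst (fun t : unit_interval => val t)).
  exact: cvg_fst.
exact: val_continuous.
Qed.

Lemma cont_pair (T U V : topologicalType) (f : T -> U) (g : T -> V) :
  continuous f -> continuous g -> continuous (fun x => (f x, g x)).
Proof. by move=> cf cg x; apply: cvg_pair; [exact: cf | exact: cg]. Qed.

Lemma cont_snd (T U : topologicalType) : continuous (@snd T U).
Proof. by move=> x; exact: cvg_snd. Qed.

Lemma cont_fst (T U : topologicalType) : continuous (@fst T U).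
Proof. by move=> x; exact: cvg_fst. Qed.

Lemma aff_cont (T : topologicalType) (g : T -> RR) (a b : RR) :
  continuous g -> continuous (fun x => a * g x + b).
Proof.
move=> cg x.
apply: (@continuousD RR RR^o T (fun x => a * g x) (fun _ => b)); last exact: cst_continuous.
apply: (@continuousM RR T (fun _ => a) g); [exact: cst_continuous | exact: cg].
Qed.

Lemma clamp_aff_cont (A : topologicalType) (a b : RR) :
  continuous (fun z : unit_interval * A => clamp (a * val z.1 + b)).
Proof.
move=> z; apply: (@continuous_comp _ _ _ (fun z : unit_interval * A => a * val z.1 + b) clamp).
  exact: (@aff_cont _ _ a b (@fst_val_continuous A) z).
exact: clamp_continuous.
Qed.

Lemma reparam_cont (A B : topologicalType) (Hm : unit_interval * A -> B) (a b : RR) :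
  continuous Hm -> continuous (fun z : unit_interval * A => Hm (clamp (a * val z.1 + b), z.2)).
Proof.
move=> cH z; apply: (@continuous_comp _ _ _ (fun z : unit_interval * A => (clamp (a * val z.1 + b), z.2)) Hm); last exact: cH.
by apply: cont_pair; [exact: clamp_aff_cont | exact: cont_snd].
Qed.

Section HomotopyBasics.
Variables A B : ptopologicalType.

Lemma phomotopic_refl (u : A -> B) : continuous u -> u point = point ->
  phomotopic u u.
Proof.
move=> cu up; exists (fun z => u z.2); split => //.
move=> z; apply: continuous_comp; [exact: cvg_snd | exact: cu].
Qed.

Lemma phomotopic_sym (u v : A -> B) : phomotopic u v -> phomotopic v u.
Proof.
case=> Hm [cH H0 H1 Hp].
exists (fun z => Hm (clamp (-1 * val z.1 + 1), z.2)); split => //.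
- exact: reparam_cont.
- move=> t t0 a; apply: H1; rewrite clamp_val t0 ?mulr0 ?add0r //; exact: ler01.
- move=> t t1 a; apply: H0; rewrite clamp_val t1 ?mulr1 ?addNr //; exact: lexx.
Qed.

Lemma phomotopic_trans (u v w : A -> B) :
  phomotopic u v -> phomotopic v w -> phomotopic u w.
Proof.
case=> Hm [cH H0 H1 Hp] [Hm' [cH' H0' H1' Hp']].
exists (fun z => if val z.1 <= 2^-1 then Hm (clamp (2 * val z.1 + 0), z.2)
                 else Hm' (clamp (2 * val z.1 + -1), z.2)); split.
- apply: (@paste2 _ _ [set z : unit_interval * A | val z.1 <= 2^-1] [set z : unit_interval * A | 2^-1 <= val z.1]).
    + exact: (closed_preim (@fst_val_continuous A) (@closed_le RR (2^-1))).
    + exact: (closed_preim (@fst_val_continuous A) (@closed_ge RR (2^-1))).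
  + by move=> z; case: (lerP (val z.1) 2^-1) => h; [left | right; exact: ltW].
  + apply: (within_agree _ (reparam_cont (a:=2) (b:=0) cH)).
    by move=> z /= ->.
  + apply: (within_agree _ (reparam_cont (a:=2) (b:=-1) cH')).
    move=> z /= hz; case: ifP => // hz'.
    have e : val z.1 = 2^-1 by apply/eqP; rewrite eq_le hz hz'.
    rewrite H1; last by rewrite clamp_val e; lra.
    by rewrite H0' // clamp_val e; lra.
- move=> t t0 a; rewrite t0 ifT; last by lra.
  by rewrite H0 // clamp_val; lra.
- move=> t t1 a; rewrite t1 ifF; last by apply/negbTE; rewrite -ltNge; lra.
  by rewrite H1' // clamp_val; lra.
- by move=> t; case: ifP => _; [exact: Hp | exact: Hp'].
Qed.

Lemma phomotopic_postcomp (C : ptopologicalType) (k : B -> C) (u v : A -> B) :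
  continuous k -> k point = point -> phomotopic u v -> phomotopic (k \o u) (k \o v).
Proof.
move=> ck kp [Hm [cH H0 H1 Hp]]; exists (k \o Hm); split => /=.
- by move=> z; apply: continuous_comp; [exact: cH | exact: ck].
- by move=> t t0 a; rewrite H0.
- by move=> t t1 a; rewrite H1.
- by move=> t; rewrite Hp.
Qed.

Lemma phomotopic_precomp (C : ptopologicalType) (m : C -> A) (u v : A -> B) :
  continuous m -> m point = point -> phomotopic u v -> phomotopic (u \o m) (v \o m).
Proof.
move=> cm mp [Hm [cH H0 H1 Hp]]; exists (fun z => Hm (z.1, m z.2)); split => /=.
- move=> z; apply: (@continuous_comp _ _ _ (fun z : unit_interval * C => (z.1, m z.2)) Hm); last exact: cH.
  apply: cont_pair; first exact: cont_fst.
  by move=> y; apply: continuous_comp; [exact: cont_snd | exact: cm].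
- by move=> t t0 a; rewrite H0.
- by move=> t t1 a; rewrite H1.
- by move=> t; rewrite mp Hp.
Qed.

End HomotopyBasics.

Section Susp.
Variable A : ptopologicalType.

Lemma susp_eqP (x y : unit_interval * A) :
  \pi_(Susp A) x = \pi_(Susp A) y <-> susp_r x y.
Proof.
split => h.
  by apply/(eqmodP (susp_rel A)).
by apply/(eqmodP (susp_rel A)).
Qed.

Lemma susp_pi_collapsed (x : unit_interval * A) :
  susp_collapsed x -> \pi_(Susp A) x = point.
Proof.
move=> cx; apply/susp_eqP; rewrite /susp_r cx /=; apply/orP; right;
by rewrite /susp_collapsed /= eqxx.
Qed.

Lemma susp_repr_collapsed (x : unit_interval * A) :
  susp_collapsed x -> susp_collapsed (repr (\pi_(Susp A) x)).
Proof.
move=> cx; have : \pi_(Susp A) (repr (\pi_(Susp A) x)) = \pi_(Susp A) x by rewrite reprK.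
move/susp_eqP => /orP[/eqP -> //|/andP[]//].
Qed.

End Susp.

Lemma collapsed_map (A B : ptopologicalType) (a : A -> B) (p : unit_interval * A) :
  a point = point -> susp_collapsed p -> susp_collapsed (p.1, a p.2).
Proof.
move=> ap; rewrite /susp_collapsed /= => /or3P[->|->|/eqP ->]; rewrite ?orbT //.
by rewrite ap eqxx !orbT.
Qed.

Lemma susp_map_pi (A B : ptopologicalType) (a : A -> B) (p : unit_interval * A) :
  a point = point -> susp_map a (\pi_(Susp A) p) = \pi_(Susp B) (p.1, a p.2).
Proof.
move=> ap; rewrite /susp_map.
have : \pi_(Susp A) (repr (\pi_(Susp A) p)) = \pi_(Susp A) p by rewrite reprK.
move/susp_eqP => /orP[/eqP -> //|/andP[c1 c2]].
apply/susp_eqP; apply/orP; right.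
by rewrite !collapsed_map.
Qed.

Lemma susp_map_point (A B : ptopologicalType) (a : A -> B) :
  a point = point -> susp_map a point = point.
Proof.
move=> ap; rewrite /= /susp_point susp_map_pi //= ap.
by apply: susp_pi_collapsed; rewrite /susp_collapsed /= eqxx.
Qed.

Lemma ui_locally_compact : locally_compact [set: unit_interval].
Proof. exact: compact_locally_compact ui_compact. Qed.

Lemma susp_map_continuous (A B : ptopologicalType) (a : A -> B) :
  continuous a -> a point = point -> continuous (susp_map a).
Proof.
move=> ca ap; apply/(@quotient_continuous _ (susp_quot A)).
have -> : susp_map a \o \pi_(quotient_topology (susp_quot A)) =
          \pi_(Susp B) \o (fun p : unit_interval * A => (p.1, a p.2)).
  by apply/funext => p /=; rewrite -susp_map_pi.
move=> p; apply: continuous_comp; last exact: pi_continuous.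
apply: cont_pair; first exact: cont_fst.
by move=> y; apply: continuous_comp; [exact: cont_snd | exact: ca].
Qed.

Lemma susp_homotopy (A W : ptopologicalType)
  (F : unit_interval * (unit_interval * A) -> W) (u v : Susp A -> W) :
  continuous F -> (forall t p, susp_collapsed p -> F (t, p) = point) ->
  (forall t p, val t = 0 -> F (t, p) = u (\pi_(Susp A) p)) ->
  (forall t p, val t = 1 -> F (t, p) = v (\pi_(Susp A) p)) ->
  phomotopic u v.
Proof.
move=> cF Fc F0 F1.
exists (fun z : unit_interval * Susp A => F (z.1, repr z.2)); split.
- apply: (@quot_prod_continuous _ (susp_quot A) unit_interval W F
    ui_locally_compact ui_hausdorff cF).
  move=> l a b /(@susp_eqP A) /orP[/eqP -> //|/andP[ca cb]].
  by rewrite !Fc.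
- by move=> t t0 q /=; rewrite F0 // reprK.
- by move=> t t1 q /=; rewrite F1 // reprK.
- move=> t /=; apply: Fc; apply: susp_repr_collapsed.
  by rewrite /susp_collapsed /= eqxx.
Qed.

Definition ui1 : unit_interval := clamp 1.
Lemma ui1E : val ui1 = 1.
Proof. by rewrite clamp_val // ler01. Qed.

Lemma phomotopic_pointed (A B : ptopologicalType) (u v : A -> B) :
  phomotopic u v -> u point = point /\ v point = point.
Proof.
case=> Hm [_ H0 H1 Hp]; split.
  by rewrite -(H0 ui0) //; exact: Hp.
by rewrite -(H1 ui1) ?ui1E //; exact: Hp.
Qed.

Lemma susp_map_comp (A B C : ptopologicalType) (f : A -> B) (g : B -> C) :
  f point = point -> g point = point ->
  susp_map (g \o f) = susp_map g \o susp_map f.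
Proof.
move=> fp gp; apply/funext => q; rewrite -[q]reprK /=.
rewrite susp_map_pi; last by rewrite /= fp gp.
by rewrite (susp_map_pi _ fp) (susp_map_pi _ gp).
Qed.

Lemma susp_phomotopic (A B : ptopologicalType) (a a' : A -> B) :
  phomotopic a a' -> phomotopic (susp_map a) (susp_map a').
Proof.
move=> /[dup] /phomotopic_pointed [ap a'p] [K [cK K0 K1 Kp]].
apply: (@susp_homotopy _ _ (fun z => \pi_(Susp B) (z.2.1, K (z.1, z.2.2)))).
- move=> z; apply: (@continuous_comp _ _ _ (fun z : unit_interval * (unit_interval * A) => (z.2.1, K (z.1, z.2.2))) (\pi_(Susp B))); last exact: pi_continuous.
  apply: cont_pair; first by move=> y; apply: continuous_comp; [exact: cont_snd|exact: cont_fst].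
  move=> y; apply: (@continuous_comp _ _ _ (fun z : unit_interval * (unit_interval * A) => (z.1, z.2.2)) K); last exact: cK.
  apply: cont_pair; first exact: cont_fst.
  by move=> x; apply: continuous_comp; [exact: cont_snd|exact: cont_snd].
- move=> t p cp /=; apply: susp_pi_collapsed.
  exact: (@collapsed_map _ _ (fun x => K (t, x)) p (Kp t) cp).
- by move=> t p t0 /=; rewrite susp_map_pi // K0.
- by move=> t p t1 /=; rewrite susp_map_pi // K1.
Qed.

Lemma phomotopic_eq (A B : ptopologicalType) (u v : A -> B) :
  u = v -> continuous u -> u point = point -> phomotopic u v.
Proof. by move=> <-; exact: phomotopic_refl. Qed.

Lemma wedge_fun_point (G Z : ptopologicalType) (F : bool -> G -> Z) :
  (forall i j, F i point = F j point) ->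
  wedge_fun (F : forall i : bool, (fun _ => G) i -> Z) (point : wedge2 G) = F true point.
Proof. move=> FE; rewrite (wedge_lift_funE (X := fun _ : bool => G)) //. Qed.

Lemma coH_sum_pointed (G B : ptopologicalType) (mu : G -> wedge2 G) (f g : G -> B) :
  pointed_map mu -> pointed_map f -> pointed_map g -> pointed_map (coH_sum mu f g).
Proof.
move=> [cm mp] [cf fp] [cg gp]; split.
  move=> x; apply: continuous_comp; first exact: cm.
  apply: (@wedge_fun_continuous bool (fun _ => G) (fun i => point) B
            (fun (i : bool) (x : G) => if i then f x else g x)).
    by case.
  by case; case => //=; rewrite fp gp.
rewrite /coH_sum /= mp wedge_fun_point //=.
by case; case => //=; rewrite fp gp.
Qed.

Lemma part1 (G H X : ptopologicalType) (f f' : G -> H) (g g' : H -> X) :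
  pointed_map f -> pointed_map f' -> pointed_map g -> pointed_map g' ->
  congruent f f' -> congruent g g' -> congruent (g \o f) (g' \o f').
Proof.
move=> [cf fp] [cf' f'p] [cg gp] [cg' g'p] Hf Hg.
rewrite /congruent (susp_map_comp fp gp) (susp_map_comp f'p g'p).
apply: (@phomotopic_trans _ _ _ (susp_map g \o susp_map f')).
  apply: (phomotopic_postcomp (susp_map_continuous cg gp) (susp_map_point gp) Hf).
apply: (phomotopic_precomp (susp_map_continuous cf' f'p) (susp_map_point f'p) Hg).
Qed.

Lemma part2 (G H X : ptopologicalType) (muG : G -> wedge2 G) (f1 f2 : G -> H) (g : H -> X) :
  pointed_map muG -> pointed_map f1 -> pointed_map f2 -> pointed_map g ->
  congruent (g \o coH_sum muG f1 f2) (coH_sum muG (g \o f1) (g \o f2)).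
Proof.
move=> pm [cf1 p1] [cf2 p2] [cg gp].
have e : g \o coH_sum muG f1 f2 = coH_sum muG (g \o f1) (g \o f2).
  apply/funext => x; rewrite /coH_sum /wedge_fun /=.
  by case: (repr _) => -[] y.
have pg1 : pointed_map (g \o f1).
  by split; [move=> x; apply: continuous_comp; [exact: cf1 | exact: cg] | rewrite /= p1].
have pg2 : pointed_map (g \o f2).
  by split; [move=> x; apply: continuous_comp; [exact: cf2 | exact: cg] | rewrite /= p2].
have [c p] := coH_sum_pointed pm pg1 pg2.
rewrite /congruent e.
exact: (phomotopic_refl (susp_map_continuous c p) (susp_map_point p)).
Qed.

Lemma clamp_le0 x : x <= 0 -> val (clamp x) = 0.
Proof. by move=> x0; rewrite /= /clampR (max_r x0) (min_l ler01). Qed.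

Lemma clamp_ge1 x : 1 <= x -> val (clamp x) = 1.
Proof.
move=> x1; rewrite /= /clampR (max_l (le_trans ler01 x1)).
by rewrite (min_r x1).
Qed.

Lemma pi_s0 (X : ptopologicalType) (s : unit_interval) (y : X) :
  val s = 0 -> \pi_(Susp X) (s, y) = point.
Proof. by move=> s0; apply: susp_pi_collapsed; rewrite /susp_collapsed /= s0 eqxx. Qed.

Lemma pi_s1 (X : ptopologicalType) (s : unit_interval) (y : X) :
  val s = 1 -> \pi_(Susp X) (s, y) = point.
Proof. by move=> s1; apply: susp_pi_collapsed; rewrite /susp_collapsed /= s1 eqxx orbT. Qed.

Lemma pi_pt (X : ptopologicalType) (s : unit_interval) :
  \pi_(Susp X) (s, point) = point.
Proof. by apply: susp_pi_collapsed; rewrite /susp_collapsed /= eqxx !orbT. Qed.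

Section Pinch.
Variables A X : ptopologicalType.

Definition pinchG (K K' : unit_interval * A -> X)
  (z : unit_interval * (unit_interval * A)) : Susp X :=
  if val z.2.1 <= 2^-1 then \pi_(Susp X) (clamp (2 * val z.2.1 + 0), K (z.1, z.2.2))
  else \pi_(Susp X) (clamp (2 * val z.2.1 + -1), K' (z.1, z.2.2)).

Definition pinchF (al be : A -> X) (p : unit_interval * A) : Susp X :=
  pinchG (fun z => al z.2) (fun z => be z.2) (ui0, p).

Definition pinchP (al be : A -> X) (q : Susp A) : Susp X := pinchF al be (repr q).

Lemma pinchG_collapsed (K K' : unit_interval * A -> X) t p :
  (forall t, K (t, point) = point) -> (forall t, K' (t, point) = point) ->
  susp_collapsed p -> pinchG K K' (t, p) = point.
Proof.
move=> Kp K'p; case: p => s x; rewrite /susp_collapsed /= => /or3P[/eqP s0|/eqP s1|/eqP ->].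
- rewrite /pinchG /= s0 ifT; last by lra.
  by apply: pi_s0; apply: clamp_le0; lra.
- rewrite /pinchG /= s1 ifF; last by apply/negbTE; rewrite -ltNge; lra.
  by apply: pi_s1; apply: clamp_ge1; lra.
- by rewrite /pinchG /=; case: ifP => _; rewrite ?Kp ?K'p pi_pt.
Qed.

Lemma sfv_cont : continuous (fun z : unit_interval * (unit_interval * A) => val z.2.1).
Proof.
move=> z; apply: (@continuous_comp _ _ _ snd (fun p : unit_interval * A => val p.1)).
  exact: cont_snd.
exact: fst_val_continuous.
Qed.

Lemma piece_cont (K : unit_interval * A -> X) (a b : RR) : continuous K ->
  continuous (fun z : unit_interval * (unit_interval * A) =>
    \pi_(Susp X) (clamp (a * val z.2.1 + b), K (z.1, z.2.2))).
Proof.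
move=> cK z.
apply: (@continuous_comp _ _ _ (fun z : unit_interval * (unit_interval * A) =>
    (clamp (a * val z.2.1 + b), K (z.1, z.2.2))) (\pi_(Susp X))); last exact: pi_continuous.
apply: cont_pair.
  move=> y; apply: (@continuous_comp _ _ _ (fun z : unit_interval * (unit_interval * A) => a * val z.2.1 + b) clamp).
    exact: (@aff_cont _ _ a b sfv_cont y).
  exact: clamp_continuous.
move=> y; apply: (@continuous_comp _ _ _ (fun z : unit_interval * (unit_interval * A) => (z.1, z.2.2)) K); last exact: cK.
apply: cont_pair; first exact: cont_fst.
by move=> w; apply: continuous_comp; [exact: cont_snd | exact: cont_snd].
Qed.

Lemma pinchG_cont (K K' : unit_interval * A -> X) :
  continuous K -> continuous K' ->
  (forall t x, K (t, x) = point \/ True) ->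
  continuous (pinchG K K').
Proof.
move=> cK cK' _.
apply: (@paste2 _ _ [set z : unit_interval * (unit_interval * A) | val z.2.1 <= 2^-1]
                    [set z : unit_interval * (unit_interval * A) | 2^-1 <= val z.2.1]).
- exact: (closed_preim sfv_cont (@closed_le RR (2^-1))).
- exact: (closed_preim sfv_cont (@closed_ge RR (2^-1))).
- by move=> z; case: (lerP (val z.2.1) 2^-1) => h; [left | right; exact: ltW].
- apply: (within_agree _ (piece_cont (a:=2) (b:=0) cK)).
  by move=> z /= h; rewrite /pinchG h.
- apply: (within_agree _ (piece_cont (a:=2) (b:=-1) cK')).
  move=> z /= hz; rewrite /pinchG; case: ifP => // hz'.
  have e : val z.2.1 = 2^-1 by apply/eqP; rewrite eq_le hz hz'.
  rewrite pi_s1; last by apply: clamp_ge1; rewrite e; lra.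
  by rewrite pi_s0 //; apply: clamp_le0; rewrite e; lra.
Qed.

Lemma pinchP_pi (al be : A -> X) p : al point = point -> be point = point ->
  pinchP al be (\pi_(Susp A) p) = pinchF al be p.
Proof.
move=> ap bp; rewrite /pinchP.
have : \pi_(Susp A) (repr (\pi_(Susp A) p)) = \pi_(Susp A) p by rewrite reprK.
move/susp_eqP => /orP[/eqP -> //|/andP[c1 c2]].
by rewrite /pinchF !pinchG_collapsed.
Qed.

Lemma pinchP_hom (al al' be be' : A -> X) :
  phomotopic al al' -> phomotopic be be' -> phomotopic (pinchP al be) (pinchP al' be').
Proof.
move=> /[dup] /phomotopic_pointed [ap a'p] [K [cK K0 K1 Kp]].
move=> /[dup] /phomotopic_pointed [bp b'p] [K' [cK' K0' K1' Kp']].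
apply: (@susp_homotopy _ _ (pinchG K K')).
- by apply: pinchG_cont => // *; right.
- by move=> t p cp; apply: pinchG_collapsed.
- move=> t p t0; rewrite pinchP_pi // /pinchF /pinchG /=.
  by rewrite (K0 t t0) (K0' t t0).
- move=> t p t1; rewrite pinchP_pi // /pinchF /pinchG /=.
  by rewrite (K1 t t1) (K1' t t1).
Qed.

End Pinch.

Lemma prod_hausdorff (U V : topologicalType) :
  hausdorff_space U -> hausdorff_space V -> hausdorff_space (U * V)%type.
Proof.
rewrite !open_hausdorff => hU hV [x1 x2] [y1 y2] xy.
have [d1|e1] := eqVneq x1 y1; last first.
  have [[P Q] /= [Px Qy] [oP oQ /eqP PQ]] := hU _ _ e1.
  exists (fst @^-1` P, fst @^-1` Q) => /=.
    by split; rewrite inE /=; apply/set_mem.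
  split.
  - exact: (open_comp (fun z _ => @cont_fst U V z) oP).
  - exact: (open_comp (fun z _ => @cont_fst U V z) oQ).
  - apply/eqP; rewrite -subset0 => z [/= zp zq].
    by have : (P `&` Q) z.1 by []; rewrite PQ.
have e2 : x2 != y2 by apply: contra_neq xy => ->; rewrite d1.
have [[P Q] /= [Px Qy] [oP oQ /eqP PQ]] := hV _ _ e2.
exists (snd @^-1` P, snd @^-1` Q) => /=.
  by split; rewrite inE /=; apply/set_mem.
split.
- exact: (open_comp (fun z _ => @cont_snd U V z) oP).
- exact: (open_comp (fun z _ => @cont_snd U V z) oQ).
- apply/eqP; rewrite -subset0 => z [/= zp zq].
  by have : (P `&` Q) z.2 by []; rewrite PQ.
Qed.

Lemma ui2_compact : compact [set: unit_interval * unit_interval].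
Proof. rewrite -setXTT; exact: compact_setX ui_compact ui_compact. Qed.

Section WJ.
Import ArrowAsCompactOpen.
Lemma wedge_joint (L W : topologicalType) (G : ptopologicalType) (k : L -> bool -> G -> W) :
  locally_compact [set: L] -> hausdorff_space L ->
  (forall i, continuous (fun z : L * G => k z.1 i z.2)) ->
  (forall l i j, k l i point = k l j point) ->
  continuous (fun z : L * wedge2 G =>
    wedge_fun (k z.1 : forall i : bool, (fun _ => G) i -> W) z.2).
Proof.
move=> lcL hL ck kE.
pose h : wedge2 G -> {compact-open, L -> W} :=
  wedge_fun ((fun (i : bool) (y : G) => (fun l => k l i y) : {compact-open, L -> W})
    : forall i : bool, (fun _ => G) i -> {compact-open, L -> W}).
have ch : continuous h.
  apply: wedge_fun_continuous.
    move=> i; apply: (@continuous_curry_fun G L W (fun z => k z.2 i z.1)).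
    move=> z; apply: (@continuous_comp _ _ _ unstable.swap (fun z : L * G => k z.1 i z.2)).
      exact: swap_continuous.
    exact: ck.
  by move=> i j; apply/funext => l; exact: kE.
have chw : forall w, continuous (h w).
  move=> w; rewrite /h /wedge_fun /unstable.sigT_fun /=; case: (repr w) => i y /= l.
  apply: (@continuous_comp _ _ _ (fun l => (l, y)) (fun z : L * G => k z.1 i z.2)).
    by apply: cont_pair; [move=> ?; exact: cvg_id | exact: cst_continuous].
  exact: ck.
have cu := continuous_uncurry lcL hL ch chw.
have -> : (fun z : L * wedge2 G =>
    wedge_fun (k z.1 : forall i : bool, (fun _ => G) i -> W) z.2) = uncurry h \o unstable.swap.
  apply/funext => -[l w] /=; rewrite /h /wedge_fun /unstable.sigT_fun /=.
  by case: (repr w).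
move=> z; apply: continuous_comp; [exact: swap_continuous | exact: cu].
Qed.
End WJ.

Definition phi (i : bool) (l : unit_interval * unit_interval) : RR :=
  if i then (1 * val l.1 + 1) * val l.2
  else (1 * val l.1 + 1) * val l.2 + ((-1) * val l.1 + 0).

Lemma phi_cont (A : topologicalType) (i : bool) :
  continuous (fun z : (unit_interval * unit_interval) * A => phi i z.1).
Proof.
have c1 : continuous (fun z : (unit_interval * unit_interval) * A => val z.1.1).
  move=> z; apply: (@continuous_comp _ _ _ fst (fun l : unit_interval * unit_interval => val l.1)).
    exact: cont_fst.
  exact: fst_val_continuous.
have c2 : continuous (fun z : (unit_interval * unit_interval) * A => val z.1.2).
  move=> z; apply: (@continuous_comp _ _ _ fst (fun l : unit_interval * unit_interval => val l.2)).
    exact: cont_fst.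
  move=> w; apply: (@continuous_comp _ _ _ (@snd unit_interval unit_interval) (fun t : unit_interval => val t)).
    exact: cont_snd.
  exact: val_continuous.
have c3 : continuous (fun z : (unit_interval * unit_interval) * A => (1 * val z.1.1 + 1) * val z.1.2).
  move=> z; apply: (@continuousM RR _ (fun z : (unit_interval * unit_interval) * A => 1 * val z.1.1 + 1)
                    (fun z => val z.1.2)); last exact: c2.
  exact: (@aff_cont _ _ 1 1 c1 z).
case: i => /=; first exact: c3.
move=> z; apply: (@continuousD RR RR^o _ (fun z : (unit_interval * unit_interval) * A => (1 * val z.1.1 + 1) * val z.1.2)
    (fun z => (-1) * val z.1.1 + 0)); first exact: c3.
exact: (@aff_cont _ _ (-1) 0 c1 z).
Qed.

Lemma wedge_proj_point (G : ptopologicalType) (b : bool) :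
  wedge_proj b (point : wedge2 G) = point.
Proof. by rewrite /wedge_proj wedge_fun_point /=; [case: ifP | move=> i j; case: ifP; case: ifP]. Qed.

Lemma wedge_proj_pointed (G : ptopologicalType) (b : bool) : pointed_map (@wedge_proj G b).
Proof.
split; last exact: wedge_proj_point.
apply: (@wedge_fun_continuous bool (fun _ => G) (fun i => point) G
          (fun (i : bool) (x : G) => if i == b then x else point)).
  by move=> i; case: (i == b); [move=> ?; exact: cvg_id | exact: cst_continuous].
by move=> i j; case: ifP; case: ifP.
Qed.

Lemma wedge_repr (G : ptopologicalType) (w : wedge2 G) :
  exists (i : bool) (y : G), forall (Z : Type) (f : bool -> G -> Z),
    wedge_fun (f : forall i : bool, (fun _ => G) i -> Z) w = f i y.
Proof. by exists (projT1 (repr w)), (projT2 (repr w)). Qed.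

Lemma susp_coH_pinch (A X : ptopologicalType) (mu : A -> wedge2 A) (a b : A -> X) :
  pointed_map mu -> pointed_map a -> pointed_map b ->
  phomotopic (susp_map (coH_sum mu a b))
             (pinchP (a \o wedge_proj true \o mu) (b \o wedge_proj false \o mu)).
Proof.
move=> [cm mp] [ca ap] [cb bp].
pose k (l : unit_interval * unit_interval) (i : bool) (y : A) : Susp X :=
  \pi_(Susp X) (clamp (phi i l), if i then a y else b y).
have kE : forall l i j, k l i point = k l j point.
  by move=> l i j; rewrite /k; case: i; case: j; rewrite ?ap ?bp !pi_pt.
apply: (@susp_homotopy _ _ (fun z => wedge_fun (k (z.1, z.2.1) : forall i : bool, (fun _ => A) i -> Susp X) (mu z.2.2))).
- move=> z.
  apply: (@continuous_comp _ _ _ (fun z : unit_interval * (unit_interval * A) => ((z.1, z.2.1), mu z.2.2))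
     (fun z : (unit_interval * unit_interval) * wedge2 A =>
        wedge_fun (k z.1 : forall i : bool, (fun _ => A) i -> Susp X) z.2)).
    apply: cont_pair.
      apply: cont_pair; first exact: cont_fst.
      by move=> w; apply: continuous_comp; [exact: cont_snd | exact: cont_fst].
    move=> w; apply: continuous_comp; last exact: cm.
    by apply: continuous_comp; [exact: cont_snd | exact: cont_snd].
  apply: wedge_joint => //.
  + exact: compact_locally_compact ui2_compact.
  + exact: prod_hausdorff ui_hausdorff ui_hausdorff.
  + move=> i w; rewrite /k.
    apply: (@continuous_comp _ _ _ (fun z : (unit_interval * unit_interval) * A =>
        (clamp (phi i z.1), if i then a z.2 else b z.2)) (\pi_(Susp X))); last exact: pi_continuous.
    apply: cont_pair.
      move=> v; apply: (@continuous_comp _ _ _ (fun z : (unit_interval * unit_interval) * A => phi i z.1) clamp).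
        exact: phi_cont.
      exact: clamp_continuous.
    by case: i => v; apply: continuous_comp; [exact: cont_snd | exact: ca | exact: cont_snd | exact: cb].
- move=> t [s x] /=; rewrite /susp_collapsed /= => /or3P[/eqP s0|/eqP s1|/eqP ->].
  + have [i [y E]] := wedge_repr (mu x); rewrite E /k {E}.
    apply: pi_s0; apply: clamp_le0; rewrite /phi /= s0.
    have h : 0 <= sval t := ui_ge0 t.
    by case: i; rewrite ?mulr0 ?add0r ?addr0; lra.
  + have [i [y E]] := wedge_repr (mu x); rewrite E /k {E}.
    apply: pi_s1; apply: clamp_ge1; rewrite /phi /= s1.
    have h : 0 <= sval t := ui_ge0 t.
    by case: i; rewrite ?mulr1; lra.
  + by rewrite mp wedge_fun_point // /k /= ap pi_pt.
- move=> t [s x] t0 /=.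
  have [_ cp] := coH_sum_pointed (conj cm mp) (conj ca ap) (conj cb bp).
  rewrite susp_map_pi //= /coH_sum /=.
  have [i [y E]] := wedge_repr (mu x); rewrite !E /k {E}.
  have -> : phi i (t, s) = val s by rewrite /phi /= t0; case: i; lra.
  by rewrite clampK; case: i.
- move=> t [s x] t1 /=.
  rewrite pinchP_pi; last by rewrite /= mp wedge_proj_point bp.
    2: by rewrite /= mp wedge_proj_point ap.
  rewrite /pinchF /pinchG /= /wedge_proj.
  have [i [y E]] := wedge_repr (mu x); rewrite !E /k {E}.
  have -> : phi i (t, s) = if i then 2 * val s + 0 else 2 * val s + -1.
    by rewrite /phi /= t1; case: i; lra.
  case: i; case: ifP => h /=.
  + by [].
  + rewrite bp pi_pt pi_s1 //; apply: clamp_ge1.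
    by move/negbT: h; rewrite -ltNge => ?; lra.
  + rewrite ap pi_pt pi_s0 //; apply: clamp_le0; lra.
  + by [].
Qed.

Lemma key (A X : ptopologicalType) (mu : A -> wedge2 A) (a b : A -> X) :
  coH_structure mu -> pointed_map a -> pointed_map b ->
  phomotopic (susp_map (coH_sum mu a b)) (pinchP a b).
Proof.
move=> [pm hT hF] pa pb.
apply: (phomotopic_trans (susp_coH_pinch pm pa pb)).
have [ca ap] := pa; have [cb bp] := pb.
apply: pinchP_hom.
  exact: (phomotopic_postcomp ca ap hT).
exact: (phomotopic_postcomp cb bp hF).
Qed.

Lemma part3 (G H X : ptopologicalType) (muG : G -> wedge2 G) (muH : H -> wedge2 H)
  (f : G -> H) (g1 g2 : H -> X) :
  coH_structure muG -> coH_structure muH ->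
  pointed_map f -> pointed_map g1 -> pointed_map g2 ->
  congruent (coH_sum muH g1 g2 \o f) (coH_sum muG (g1 \o f) (g2 \o f)).
Proof.
move=> cG cH [cf fp] pg1 pg2.
have [pmH _ _] := cH.
have [csH psH] := coH_sum_pointed pmH pg1 pg2.
have [cg1 g1p] := pg1; have [cg2 g2p] := pg2.
have pf1 : pointed_map (g1 \o f).
  by split; [move=> x; apply: continuous_comp; [exact: cf | exact: cg1] | rewrite /= fp].
have pf2 : pointed_map (g2 \o f).
  by split; [move=> x; apply: continuous_comp; [exact: cf | exact: cg2] | rewrite /= fp].
rewrite /congruent (susp_map_comp fp psH).
apply: (@phomotopic_trans _ _ _ (pinchP (g1 \o f) (g2 \o f))); last first.
  by apply: phomotopic_sym; exact: key cG pf1 pf2.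
have e : pinchP g1 g2 \o susp_map f = pinchP (g1 \o f) (g2 \o f).
  apply/funext => q; rewrite -[q]reprK /=.
  rewrite (susp_map_pi _ fp) (pinchP_pi _ g1p g2p).
  by rewrite (pinchP_pi _ pf1.2 pf2.2).
rewrite -e.
exact: (phomotopic_precomp (susp_map_continuous cf fp) (susp_map_point fp) (key cH pg1 pg2)).
Qed.

Unset Implicit Arguments.
Close Scope ring_scope.
Close Scope classical_set_scope.
Close Scope quotient_scope.

Theorem proposition5p13 (G H X : ptopologicalType)
    (muG : G -> wedge2 G) (muH : H -> wedge2 H) :
  coH_structure muG -> coH_structure muH ->
  [/\ (* well defined *)
      (forall (f f' : G -> H) (g g' : H -> X),
         pointed_map f -> pointed_map f' -> pointed_map g -> pointed_map g' ->
         congruent f f' -> congruent g g' -> congruent (g \o f) (g' \o f')),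
      (* additive in the first variable *)
      (forall (f1 f2 : G -> H) (g : H -> X),
         pointed_map f1 -> pointed_map f2 -> pointed_map g ->
         congruent (g \o coH_sum muG f1 f2) (coH_sum muG (g \o f1) (g \o f2))) &
      (* additive in the second variable *)
      (forall (f : G -> H) (g1 g2 : H -> X),
         pointed_map f -> pointed_map g1 -> pointed_map g2 ->
         congruent (coH_sum muH g1 g2 \o f) (coH_sum muG (g1 \o f) (g2 \o f)))].
Proof.
move=> cG cH; split.
- exact: part1.
- move=> f1 f2 g p1 p2 pg; have [pm _ _] := cG; exact: part2.
- move=> f g1 g2 pf p1 p2; exact: part3.
Qed.
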